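(* Let $H$ be a Krull monoid with class group $G$, let $G_0\subseteq G$ be the set of classes containing a prime divisor, and let $G_1\subseteq G_0$ be the set of classes containing exactly one prime divisor. The following are equivalent: (a) every irreducible element of $H$ is absolutely irreducible; (b) every irreducible element of $\mathcal B(G_0)$ is absolutely irreducible, and for every irreducible $U\in\mathcal B(G_0)$ and every $g\in G_0\setminus G_1$ we have $\mathsf v_g(U)\le1$.
   Context: $H$ is a cancellative commutative monoid; it is Krull if $v$-noetherian and completely integrally closed. $\mathfrak X(H)$ is the set of nonempty divisorial prime ideals (prime divisors) of $H$; the class group $G$ (written additively) is the group of divisorial fractional ideals modulo principal ones, and $[\mathfrak p]$ is the class of $\mathfrak p$. For $G_0\subseteq G$, $\mathcal F(G_0)$ is the free abelian monoid on $G_0$; its elements $S=\prod_{g\in G_0}g^{\mathsf v_g(S)}$ are sequences, with sum $\sigma(S)=\sum\mathsf v_g(S)g$; $\mathcal B(G_0)=\{S\in\mathcal F(G_0):\sigma(S)=0\}$ is the monoid of zero-sum sequences. Irreducible: non-unit not a product of two non-units. An irreducible $r$ is absolutely irreducible if for every $n$, every factorization of $r^n$ into irreducibles coincides, up to order and associates, with $r\cdots r$. *)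

(* Defs.v *)
From mathcomp Require Import all_boot all_algebra.
Set Implicit Arguments. Unset Strict Implicit. Unset Printing Implicit Defensive.
Import GRing.Theory.
Local Open Scope ring_scope.

(* Convention: a cancellative commutative monoid H is represented (up to
   isomorphism) as a submonoid of its quotient group q(H) = Q, written
   ADDITIVELY (Q : zmodType).  So "a * b" in H is a + b, "1" is 0, and
   q(H) = H - H. *)

Section KrullMonoid.
Variable Q : zmodType.
Variable H : Q -> Prop.

Definition set_eq (X Y : Q -> Prop) := forall x, X x <-> Y x.
Definition subset (X Y : Q -> Prop) := forall x, X x -> Y x.
Definition translate (a : Q) (X : Q -> Prop) : Q -> Prop :=
  fun z => exists x, X x /\ z = a + x.

Definition is_submonoid := H 0 /\ (forall a b, H a -> H b -> H (a + b)).
Definition generates_group := forall q : Q, exists a b, H a /\ H b /\ q = a - b.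

Definition ideal_quot (X : Q -> Prop) : Q -> Prop :=
  fun z => forall x, X x -> H (z + x).
Definition vop (X : Q -> Prop) : Q -> Prop := ideal_quot (ideal_quot X).
Definition vprod (X Y : Q -> Prop) : Q -> Prop :=
  vop (fun z => exists x y, X x /\ Y y /\ z = x + y).

Definition m_ideal (X : Q -> Prop) :=
  subset X H /\ forall h x, H h -> X x -> X (h + x).
Definition divisorial_ideal (X : Q -> Prop) := m_ideal X /\ set_eq (vop X) X.

Definition v_noetherian :=
  forall A : nat -> Q -> Prop,
    (forall n, divisorial_ideal (A n)) ->
    (forall n, subset (A n) (A n.+1)) ->
    exists N, forall n, (N <= n)%N -> set_eq (A n) (A N).

Definition completely_integrally_closed :=
  forall x : Q, (exists c, H c /\ forall n, (1 <= n)%N -> H (c + x *+ n)) -> H x.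

Definition krull :=
  [/\ is_submonoid, generates_group, v_noetherian & completely_integrally_closed].

Definition prime_ideal (p : Q -> Prop) :=
  [/\ m_ideal p, (exists h, H h /\ ~ p h) &
      forall a b, H a -> H b -> p (a + b) -> p a \/ p b].
Definition prime_divisor (p : Q -> Prop) :=
  [/\ prime_ideal p, (exists x, p x) & set_eq (vop p) p].

Definition frac_divisorial (X : Q -> Prop) :=
  [/\ (exists x, X x),
      (exists c, H c /\ forall x, X x -> H (c + x)),
      (forall h x, H h -> X x -> X (h + x)) &
      set_eq (vop X) X].

(* (G, cl) is the class group of H: cl induces an isomorphism from the group
   of divisorial fractional ideals (under v-multiplication) modulo the
   principal ones onto G. *)
Definition is_class_group (G : zmodType) (cl : (Q -> Prop) -> G) :=
  [/\ (forall g, exists X, frac_divisorial X /\ cl X = g),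
      (forall X Y, frac_divisorial X -> frac_divisorial Y ->
         (cl X = cl Y <-> exists a, set_eq X (translate a Y))) &
      (forall X Y, frac_divisorial X -> frac_divisorial Y ->
         cl (vprod X Y) = cl X + cl Y)].

Definition m_unit (a : Q) := H a /\ H (- a).
Definition m_irreducible (a : Q) :=
  [/\ H a, ~ m_unit a &
      forall b c, H b -> H c -> a = b + c -> m_unit b \/ m_unit c].
Definition m_associated (a b : Q) := [/\ H a, H b & m_unit (a - b)].
Definition m_abs_irreducible (r : Q) :=
  m_irreducible r /\
  forall (n : nat) (rs : seq Q),
    (forall x, x \in rs -> m_irreducible x) ->
    \sum_(x <- rs) x = r *+ n ->
    size rs = n /\ forall x, x \in rs -> m_associated x r.

Definition classes_G0 (G : zmodType) (cl : (Q -> Prop) -> G) (g : G) :=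
  exists p, prime_divisor p /\ cl p = g.
Definition classes_G1 (G : zmodType) (cl : (Q -> Prop) -> G) (g : G) :=
  exists p, [/\ prime_divisor p, cl p = g &
    forall p', prime_divisor p' -> cl p' = g -> set_eq p' p].

End KrullMonoid.

Section ZeroSum.
Variable G : zmodType.
Variable G0 : G -> Prop.
(* sequences over G0 are seq G taken up to permutation (perm_eq) *)
Definition zs_seq (S : seq G) :=
  (forall g, g \in S -> G0 g) /\ \sum_(g <- S) g = 0.
(* irreducible elements of B(G0) (the only unit is the empty sequence) *)
Definition B_atom (U : seq G) :=
  [/\ zs_seq U, U != [::] &
      forall T V, zs_seq T -> zs_seq V -> perm_eq U (T ++ V) ->
        T = [::] \/ V = [::]].
Definition B_abs_atom (U : seq G) :=
  B_atom U /\
  forall (n : nat) (Vs : seq (seq G)),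
    (forall V, V \in Vs -> B_atom V) ->
    perm_eq (flatten Vs) (flatten (nseq n U)) ->
    size Vs = n /\ forall V, V \in Vs -> perm_eq V U.
End ZeroSum.

(* Main.v *)
Require Import Defs.
From mathcomp Require Import all_boot all_algebra.
From mathcomp Require Import all_boot.
From mathcomp Require Import boolp.
From mathcomp Require Import zify.
Set Implicit Arguments. Unset Strict Implicit. Unset Printing Implicit Defensive.

Lemma map_flat (T S : Type) (f : T -> S) (ss : seq (seq T)) :
  map f (flatten ss) = flatten (map (map f) ss).
Proof. by elim: ss => //= s ss IH; rewrite map_cat IH. Qed.

Lemma lift_map (T S : eqType) (f : T -> S) (A B : seq S) (s : seq T) :
  perm_eq (map f s) (A ++ B) ->
  exists s1 s2, [/\ perm_eq s (s1 ++ s2), perm_eq (map f s1) A & perm_eq (map f s2) B].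
Proof.
elim: A s => [|a A IH] s pe; first by exists [::], s; split.
have : a \in map f s by rewrite (perm_mem pe) mem_head.
case/mapP => x xs ax; subst a.
have pe1 : perm_eq (map f (rem x s)) (A ++ B).
  rewrite -(perm_cons (f x)); apply: perm_trans pe.
  by rewrite perm_sym -map_cons perm_map // perm_to_rem.
have [s1 [s2 [p1 p2 p3]]] := IH _ pe1.
exists (x :: s1), s2; split=> //.
  by apply: perm_trans (perm_to_rem xs) _; rewrite /= perm_cons.
by rewrite /= perm_cons.
Qed.

Lemma perm_count (T : eqType) (s t : seq T) :
  (forall x, count_mem x s = count_mem x t) -> perm_eq s t.
Proof. by move=> h; rewrite /perm_eq; apply/allP => x _ /=; rewrite h. Qed.

Lemma sumn_le_size (s : seq nat) : (forall x, x \in s -> x <= 1) -> sumn s <= size s.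
Proof.
elim: s => //= x s IH h.
have h' : forall z, z \in s -> z <= 1 by move=> z zs; apply: h; rewrite inE zs orbT.
have := h x (mem_head _ _); have := IH h'; lia.
Qed.

Lemma sumn_ones (s : seq nat) : (forall x, x \in s -> x <= 1) -> sumn s = size s ->
  forall x, x \in s -> x = 1.
Proof.
elim: s => //= y s IH h e x.
have h' : forall z, z \in s -> z <= 1 by move=> z zs; apply: h; rewrite inE zs orbT.
rewrite inE => /orP [/eqP ->|xs].
  have := h y (mem_head _ _); have := sumn_le_size h'; lia.
apply: IH xs => //.
have := h y (mem_head _ _); have := sumn_le_size h'; lia.
Qed.

Lemma sumn_zero (s : seq nat) : sumn s = 0 -> forall x, x \in s -> x = 0.
Proof.
elim: s => //= y s IH e x; rewrite inE => /orP [/eqP ->|xs]; first by lia.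
by apply: IH xs; lia.
Qed.

Lemma count_le_map (T S : eqType) (f : T -> S) (p : T) (s : seq T) :
  count_mem p s <= count_mem (f p) (map f s).
Proof.
rewrite count_map; apply: sub_count => q /= /eqP ->; exact: eqxx.
Qed.

Lemma count_eq_map (T S : eqType) (f : T -> S) (p : T) (s : seq T) :
  (forall q, q \in s -> f q = f p -> q = p) ->
  count_mem p s = count_mem (f p) (map f s).
Proof.
move=> h; rewrite count_map; apply: eq_in_count => q qs /=.
apply/eqP/eqP => [->|]//; exact: h.
Qed.

Lemma count_lemma (T S : eqType) (f : T -> S) (P : T -> Prop)
    (qss : seq (seq T)) (l : seq T) (n : nat) :
  size qss = n -> perm_eq (flatten qss) (flatten (nseq n l)) ->
  (forall qs, qs \in qss -> perm_eq (map f qs) (map f l)) ->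
  (forall x, x \in l -> P x) -> (forall qs x, qs \in qss -> x \in qs -> P x) ->
  (forall p, P p -> (forall q, P q -> f q = f p -> q = p) \/ (count_mem (f p) (map f l) <= 1)) ->
  forall qs, qs \in qss -> perm_eq qs l.
Proof.
move=> sz pe pm Pl Pq hP qs qsi; apply: perm_count => p.
case: (boolP ((p \in qs) || (p \in l))) => [pin|]; last first.
  by rewrite negb_or => /andP [/count_memPn -> /count_memPn ->].
have Pp : P p by case/orP: pin => [/(Pq _ _ qsi)|/Pl].
case: (hP p Pp) => [uq|c1].
  rewrite (count_eq_map (f := f)) ?(count_eq_map (f := f) (s := l)).
  - by apply/eqP; rewrite -/(pred1 (f p)); have := permP (pm _ qsi) (pred1 (f p)); move=> ->.
  - by move=> q ql; apply: uq; apply: Pl.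
  - by move=> q qq; apply: uq; apply: Pq qsi qq.
have cl1 : count_mem p l <= 1 by apply: leq_trans c1; apply: count_le_map.
have bnd : forall qs', qs' \in qss -> count_mem p qs' <= count_mem p l ->
    True by [].
have le1 : forall x, x \in map (fun s => count_mem p s) qss -> x <= 1.
  move=> x /mapP [qs' qs'i ->]; apply: leq_trans (count_le_map f p qs') _.
  by rewrite (permP (pm _ qs'i)).
have tot : sumn (map (fun s => count_mem p s) qss) = count_mem p l * n.
  by rewrite -count_flatten (permP pe) count_flatten map_nseq sumn_nseq.
have qin : count_mem p qs \in map (fun s => count_mem p s) qss by apply: map_f.
move: cl1; rewrite leq_eqVlt ltnS leqn0 => /orP [/eqP e1|/eqP e0].
  rewrite e1; apply: (sumn_ones le1) qin.
  by rewrite tot e1 mul1n size_map.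
rewrite e0; apply: (sumn_zero _) qin.
by rewrite tot e0 mul0n.
Qed.

From mathcomp Require Import all_algebra.
Import GRing.Theory.
Local Open Scope ring_scope.

Section SetAlg.
Variable Q : zmodType.
Variable H : Q -> Prop.
Hypothesis H0 : H 0.
Hypothesis HD : forall a b, H a -> H b -> H (a + b).

Definition sumset (X Y : Q -> Prop) : Q -> Prop :=
  fun z => exists x y, X x /\ Y y /\ z = x + y.
Definition hmod (X : Q -> Prop) := forall h x, H h -> X x -> X (h + x).

Lemma sext (X Y : Q -> Prop) : (forall x, X x <-> Y x) -> X = Y.
Proof. by move=> e; apply: funext => x; apply: propext. Qed.

Lemma sext2 (X Y : Q -> Prop) : Defs.subset X Y -> Defs.subset Y X -> X = Y.
Proof. by move=> a b; apply: sext => x; split; [apply: a| apply: b]. Qed.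

Lemma iq_anti X Y : Defs.subset X Y -> Defs.subset (ideal_quot H Y) (ideal_quot H X).
Proof. by move=> s z hz x /s; apply: hz. Qed.

Lemma vop_ext X : Defs.subset X (vop H X).
Proof. by move=> x Xx z hz; rewrite addrC; apply: hz. Qed.

Lemma iq_vop X : ideal_quot H (vop H X) = ideal_quot H X.
Proof.
apply: sext2; first by apply: iq_anti; apply: vop_ext.
by move=> z hz y hy; rewrite addrC; apply: hy.
Qed.

Lemma vop_idem X : vop H (vop H X) = vop H X.
Proof. by rewrite /vop -/(vop H X) iq_vop. Qed.

Lemma vop_mono X Y : Defs.subset X Y -> Defs.subset (vop H X) (vop H Y).
Proof. by move=> s; apply: iq_anti; apply: iq_anti. Qed.

Lemma iq_mod X : hmod (ideal_quot H X).
Proof. by move=> h z hh hz x Xx; rewrite -addrA; apply: HD => //; apply: hz. Qed.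

Lemma vop_mod X : hmod (vop H X).
Proof. exact: iq_mod. Qed.

Lemma sumsetC X Y : sumset X Y = sumset Y X.
Proof.
by apply: sext => z; split=> -[x [y [a [b ->]]]]; exists y, x; rewrite addrC.
Qed.

Lemma sumsetA X Y Z : sumset X (sumset Y Z) = sumset (sumset X Y) Z.
Proof.
apply: sext => z; split.
  move=> [x [w [a [[y [u [b [c ->]]]] ->]]]]; exists (x + y), u.
  by split; [exists x, y|split=> //; rewrite addrA].
move=> [w [u [[x [y [a [b ->]]]] [c ->]]]]; exists x, (y + u).
by split=> //; split; [exists y, u| rewrite addrA].
Qed.

Lemma sumset_mono X X' Y : Defs.subset X X' -> Defs.subset (sumset X Y) (sumset X' Y).
Proof. by move=> s z [x [y [a [b ->]]]]; exists x, y; split=> //; apply: s. Qed.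

Lemma iq_sum_vop A B : ideal_quot H (sumset (vop H A) B) = ideal_quot H (sumset A B).
Proof.
apply: sext2.
  by apply: iq_anti; apply: sumset_mono; apply: vop_ext.
move=> z hz w [y [b [hy [hb ->]]]].
have: ideal_quot H A (z + b).
  by move=> a Aa; rewrite -addrA (addrC b); apply: hz; exists a, b.
by move=> /hy; rewrite addrCA.
Qed.

Lemma vop_sum_l A B : vop H (sumset (vop H A) B) = vop H (sumset A B).
Proof. by rewrite /vop iq_sum_vop. Qed.

Lemma vop_sum_r A B : vop H (sumset A (vop H B)) = vop H (sumset A B).
Proof. by rewrite sumsetC vop_sum_l sumsetC. Qed.

Lemma vprodE X Y : vprod H X Y = vop H (sumset X Y).
Proof. by []. Qed.

Lemma vprodC X Y : vprod H X Y = vprod H Y X.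
Proof. by rewrite !vprodE sumsetC. Qed.

Lemma vprodA X Y Z : vprod H X (vprod H Y Z) = vprod H (vprod H X Y) Z.
Proof. by rewrite !vprodE vop_sum_r vop_sum_l sumsetA. Qed.

Lemma vop_H : vop H H = H.
Proof.
have e : ideal_quot H H = H.
  apply: sext2; last by move=> z hz x hx; apply: HD.
  by move=> z hz; rewrite -[z]addr0; apply: hz.
by rewrite /vop e e.
Qed.

Lemma sumset_H Y : hmod Y -> sumset H Y = Y.
Proof.
move=> mY; apply: sext2; first by move=> z [h [y [hh [hy ->]]]]; apply: mY.
by move=> y hy; exists 0, y; rewrite add0r.
Qed.

Lemma vprod_H Y : hmod Y -> vop H Y = Y -> vprod H H Y = Y.
Proof. by move=> mY vY; rewrite vprodE sumset_H. Qed.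

Lemma vprod_mod X Y : hmod (vprod H X Y).
Proof. exact: vop_mod. Qed.

Lemma vprod_vop X Y : vop H (vprod H X Y) = vprod H X Y.
Proof. exact: vop_idem. Qed.

Lemma tr_tr (a b : Q) X : translate a (translate b X) = translate (a + b) X.
Proof.
apply: sext => z; split.
  by move=> [w [[x [Xx ->]] ->]]; exists x; rewrite addrA.
by move=> [x [Xx ->]]; exists (b + x); split; [exists x| rewrite addrA].
Qed.

Lemma tr0 (X : Q -> Prop) : translate 0 X = X.
Proof.
by apply: sext => z; split; [move=> [x [Xx ->]]; rewrite add0r| exists z; rewrite add0r].
Qed.

Lemma trP (a : Q) X z : translate a X z <-> X (z - a).
Proof.
split; first by move=> [x [Xx ->]]; rewrite addrC addKr.
by move=> Xz; exists (z - a); split=> //; rewrite addrCA subrr addr0.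
Qed.

Lemma iq_tr (a : Q) X : ideal_quot H (translate a X) = translate (- a) (ideal_quot H X).
Proof.
apply: sext => z; rewrite trP opprK; split.
  move=> hz x Xx; rewrite -addrA; apply: hz; exists x; done.
move=> hz w [x [Xx ->]]; rewrite addrA; exact: hz.
Qed.

Lemma vop_tr (a : Q) X : vop H (translate a X) = translate a (vop H X).
Proof. by rewrite /vop iq_tr iq_tr opprK. Qed.

Lemma sumset_tr (a : Q) X Y : sumset (translate a X) Y = translate a (sumset X Y).
Proof.
apply: sext => z; split.
  move=> [w [y [[x [Xx ->]] [Yy ->]]]]; exists (x + y); split; last by rewrite addrA.
  by exists x, y.
move=> [w [[x [y [Xx [Yy ->]]]] ->]]; exists (a + x), y.
by split; [exists x| split=> //; rewrite addrA].
Qed.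

Lemma vprod_trl (a : Q) X Y : vprod H (translate a X) Y = translate a (vprod H X Y).
Proof. by rewrite !vprodE sumset_tr vop_tr. Qed.

Lemma vprod_trr (a : Q) X Y : vprod H X (translate a Y) = translate a (vprod H X Y).
Proof. by rewrite vprodC vprod_trl vprodC. Qed.

Lemma tr_hmod (a : Q) X : hmod X -> hmod (translate a X).
Proof.
move=> m h z hh [x [Xx ->]]; exists (h + x); split; first exact: m.
by rewrite addrCA.
Qed.

Lemma H_hmod : hmod H.
Proof. by move=> h x; apply: HD. Qed.

Lemma trH_vop (a : Q) : vop H (translate a H) = translate a H.
Proof. by rewrite vop_tr vop_H. Qed.

Lemma vprod_trH (a b : Q) : vprod H (translate a H) (translate b H) = translate (a + b) H.
Proof.
by rewrite vprod_trl vprod_trr vprod_H ?vop_H ?tr_tr //; apply: H_hmod.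
Qed.

Lemma vprod_int_sub X Y : hmod X -> vop H X = X -> Defs.subset Y H -> Defs.subset (vprod H X Y) X.
Proof.
move=> mX vX sY; rewrite -{2}vX vprodE; apply: vop_mono.
by move=> z [x [y [Xx [Yy ->]]]]; rewrite addrC; apply: mX => //; apply: sY.
Qed.

End SetAlg.
Arguments iq_anti {Q H}.
Arguments vop_ext {Q H}.
Arguments iq_vop {Q H}.
Arguments vop_idem {Q H}.
Arguments vop_mono {Q H}.
Arguments iq_sum_vop {Q H}.
Arguments vop_sum_l {Q H}.
Arguments vop_sum_r {Q H}.
Arguments vprodE {Q H}.
Arguments vprodC {Q H}.
Arguments vprodA {Q H}.
Arguments vprod_vop {Q H}.
Arguments iq_tr {Q H}.
Arguments vop_tr {Q H}.
Arguments vprod_trl {Q H}.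
Arguments vprod_trr {Q H}.
Arguments vprod_int_sub {Q H}.

Import GRing.Theory.
Local Open Scope ring_scope.

Lemma Defs_sub_trans (Q : zmodType) (X Y Z : Q -> Prop) :
  Defs.subset X Y -> Defs.subset Y Z -> Defs.subset X Z.
Proof. by move=> a b x /a /b. Qed.
Arguments Defs_sub_trans {Q X Y Z}.

Section Krull.
Variable Q : zmodType.
Variable H : Q -> Prop.
Variable G : zmodType.
Variable cl : (Q -> Prop) -> G.
Hypothesis KH : krull H.
Hypothesis CG : is_class_group H cl.

Lemma H0 : H 0. Proof. by case: KH => -[]. Qed.
Lemma HD a b : H a -> H b -> H (a + b). Proof. by case: KH => -[_ h] _ _ _; apply: h. Qed.
Lemma Hgen : generates_group H. Proof. by case: KH. Qed.
Lemma HvN : v_noetherian H. Proof. by case: KH. Qed.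

Local Notation D := (frac_divisorial H).
Local Notation vop := (vop H).
Local Notation vprod := (vprod H).

Lemma seteqE (X Y : Q -> Prop) : set_eq X Y -> X = Y.
Proof. exact: sext. Qed.

Lemma D_vopE X : D X -> vop X = X.
Proof. by case=> _ _ _ /seteqE. Qed.
Lemma D_mod X : D X -> hmod H X.
Proof. by case. Qed.

Lemma D_H : D H.
Proof.
split; first by exists 0; exact: H0.
- by exists 0; split; [exact: H0| move=> x hx; rewrite add0r].
- exact: (@H_hmod _ _ HD).
- by rewrite vop_H //; [exact: H0| exact: HD].
Qed.

Lemma D_tr (a : Q) X : D X -> D (translate a X).
Proof.
case=> [[x Xx] [c [hc bX]] mX vX]; split.
- by exists (a + x), x.
- have [a1 [a2 [h1 [h2 ea]]]] := Hgen a.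
  exists (a2 + c); split; first exact: HD.
  move=> z [y [Yy ->]]; rewrite ea.
  have -> : a2 + c + (a1 - a2 + y) = a1 + (c + y).
    by rewrite addrACA [a2 + _]addrCA subrr addr0.
  by apply: HD => //; apply: bX.
- exact: tr_hmod.
- by move=> z; rewrite vop_tr (seteqE vX).
Qed.

Lemma D_vop_gen X c : (exists x, X x) -> H c -> (forall x, X x -> H (c + x)) -> D (vop X).
Proof.
move=> [x Xx] hc bX; split.
- by exists x; apply: vop_ext.
- by exists c; split=> // y hy; rewrite addrC; apply: hy.
- exact: (@vop_mod _ _ HD).
- by rewrite vop_idem.
Qed.

Lemma D_vprod X Y : D X -> D Y -> D (vprod X Y).
Proof.
case=> [[x Xx] [c [hc bX]] _ _]; case=> [[y Yy] [d [hd bY]] _ _].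
apply: (@D_vop_gen _ (c + d)).
- by exists (x + y), x, y.
- exact: HD.
- move=> z [u [v [Uu [Vv ->]]]].
  have -> : c + d + (u + v) = (c + u) + (d + v).
    by rewrite -!addrA; congr (_ + _); rewrite addrCA.
  by apply: HD; [apply: bX| apply: bY].
Qed.

Lemma D_vop_int X : (exists x, X x) -> Defs.subset X H -> D (vop X).
Proof. move=> ne s; apply: (@D_vop_gen X 0 ne H0) => x Xx; rewrite add0r; exact: s. Qed.

Lemma vopH : vop H = H.
Proof. exact: (@vop_H _ _ H0 HD). Qed.
Lemma HH : hmod H H.
Proof. exact: (@H_hmod _ _ HD). Qed.

Lemma vop_int X : Defs.subset X H -> Defs.subset (vop X) H.
Proof. by move=> s; rewrite -{2}vopH; apply: vop_mono. Qed.

Lemma vprodHH : vprod H H = H.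
Proof. by rewrite (vprod_H H0 HH vopH). Qed.

Lemma clP X Y : D X -> D Y -> cl X = cl Y <-> exists a, X = translate a Y.
Proof.
move=> dX dY; case: CG => _ h _; rewrite h //.
by split=> -[a e]; exists a; [apply: seteqE| rewrite e].
Qed.

Lemma clM X Y : D X -> D Y -> cl (vprod X Y) = cl X + cl Y.
Proof. by case: CG => _ _ h; apply: h. Qed.

Lemma cl_H : cl H = 0.
Proof.
have := clM D_H D_H; rewrite vprodHH => e.
by move: e => /(congr1 (fun x => x - cl H)); rewrite subrr addrK => <-.
Qed.


Lemma cl_tr (a : Q) X : D X -> cl (translate a X) = cl X.
Proof. by move=> dX; apply/(clP (D_tr a dX) dX); exists a. Qed.

Lemma D_inv (X : Q -> Prop) : D X -> exists X', D X' /\ vprod X X' = H.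
Proof.
move=> dX; case: CG => surj _ _.
have [Y0 [dY e]] := surj (- cl X).
have dP := D_vprod dX dY.
have : cl (vprod X Y0) = cl H by rewrite clM // e cl_H subrr.
case/(clP dP D_H) => a ea.
exists (translate (-a) Y0); split; first exact: D_tr.
by rewrite vprod_trr ea tr_tr addNr tr0.
Qed.

Lemma D_cancel (X Y Z : Q -> Prop) : D X -> hmod H Y -> vop Y = Y -> hmod H Z -> vop Z = Z ->
  vprod X Y = vprod X Z -> Y = Z.
Proof.
move=> dX mY vY mZ vZ e; have [X' [_ e']] := D_inv dX.
transitivity (vprod (vprod X' X) Y).
  by rewrite (vprodC X' X) e' (vprod_H H0 mY vY).
by rewrite -vprodA e vprodA (vprodC X' X) e' (vprod_H H0 mZ vZ).
Qed.

Lemma sumset_mono_r (X Y Y' : Q -> Prop) : Defs.subset Y Y' -> Defs.subset (sumset X Y) (sumset X Y').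
Proof. by move=> s; rewrite (sumsetC X) (sumsetC X); apply: sumset_mono. Qed.

Lemma vprod_mono_r (X Y Y' : Q -> Prop) : Defs.subset Y Y' -> Defs.subset (vprod X Y) (vprod X Y').
Proof. by move=> s; apply: vop_mono; apply: sumset_mono_r. Qed.

Lemma vprod_mono_l (X X' Y : Q -> Prop) : Defs.subset X X' -> Defs.subset (vprod X Y) (vprod X' Y).
Proof. by move=> s; apply: vop_mono; apply: sumset_mono. Qed.

Lemma sumset_vprod (X Y : Q -> Prop) : Defs.subset (sumset X Y) (vprod X Y).
Proof. exact: vop_ext. Qed.

Section Primes.
Variable p : Q -> Prop.
Hypothesis pp : prime_divisor H p.

Lemma pd_int : Defs.subset p H.
Proof. by case: pp => -[[]]. Qed.
Lemma pd_mod : hmod H p.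
Proof. by case: pp => -[[]]. Qed.
Lemma pd_vop : vop p = p.
Proof. by case: pp => _ _ /seteqE. Qed.
Lemma pd_D : D p.
Proof.
split; first by case: pp.
- by exists 0; split; [exact: H0| move=> x /pd_int; rewrite add0r].
- exact: pd_mod.
- by rewrite pd_vop.
Qed.
Lemma pd_proper : p <> H.
Proof. by case: pp => -[_ [h [hh nh]] _] _ _ e; apply: nh; rewrite e. Qed.

Lemma prime_split (A B : Q -> Prop) : Defs.subset A H -> Defs.subset B H ->
  Defs.subset (sumset A B) p -> Defs.subset A p \/ Defs.subset B p.
Proof.
move=> sA sB sAB; case: pp => -[_ _ pr] _ _.
case: (pselect (Defs.subset A p)) => hA; [by left| right].
have [a [Aa npa]] : exists a, A a /\ ~ p a.
  apply: contrapT => nex; apply: hA => x Ax; apply: contrapT => npx.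
  by apply: nex; exists x.
move=> b Bb; have : p (a + b) by apply: sAB; exists a, b.
by case/pr; [apply: sA| apply: sB| |].
Qed.
End Primes.

Lemma pd_le (p q : Q -> Prop) : prime_divisor H p -> prime_divisor H q -> Defs.subset q p -> q = p.
Proof.
move=> pp pq sqp.
have [p' [dp' ep']] := D_inv (pd_D pp).
set J := vprod p' q.
have sJ : Defs.subset J H.
  by rewrite -ep' vprodC; apply: vprod_mono_r.
have eq : vprod p J = q.
  by rewrite /J vprodA ep' (vprod_H H0 (pd_mod pq) (pd_vop pq)).
have := @prime_split q pq p J (pd_int pp) sJ.
case.
- by rewrite -eq; apply: sumset_vprod.
- by move=> spq; apply: sext2.
move=> sJq; exfalso; apply: (pd_proper pp).
have e2 : vprod q p = vprod q H.
  rewrite (vprodC q H) (vprod_H H0 (pd_mod pq) (pd_vop pq)).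
  apply: sext2.
    apply: vprod_int_sub; [exact: pd_mod pq| exact: pd_vop pq| exact: pd_int pp].
  by rewrite -{1}eq (vprodC q p); apply: vprod_mono_r.
apply: (D_cancel (pd_D pq) (pd_mod pp) (pd_vop pp) HH vopH e2).
Qed.


Lemma acc_max (S : (Q -> Prop) -> Prop) :
  (forall X, S X -> divisorial_ideal H X) -> (exists X, S X) ->
  exists M, S M /\ forall Y, S Y -> Defs.subset M Y -> Y = M.
Proof.
move=> dS [X0 SX0]; apply: contrapT => nM.
have step : forall X, S X -> exists Y, S Y /\ Defs.subset X Y /\ Y <> X.
  move=> X SX; apply: contrapT => nY; apply: nM; exists X; split=> // Y SY sXY.
  by apply: contrapT => neq; apply: nY; exists Y.
pose nxt X := match pselect (exists Y, S Y /\ Defs.subset X Y /\ Y <> X) with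
  | left e => proj1_sig (cid e) | right _ => X end.
have nxtP : forall X, S X -> S (nxt X) /\ Defs.subset X (nxt X) /\ nxt X <> X.
  move=> X SX; rewrite /nxt; case: pselect => [e|ne]; last first.
    by exfalso; apply: ne; apply: step.
  by case: (cid e).
pose A n := iter n nxt X0.
have SA : forall n, S (A n) by elim=> [|n IH] //=; case: (nxtP _ IH).
have [N hN] := HvN (fun n => dS _ (SA n)) (fun n => (nxtP _ (SA n)).2.1).
by apply: (nxtP _ (SA N)).2.2; apply: seteqE; apply: (hN N.+1 (leqnSn N)).
Qed.

Lemma prime_above X : D X -> Defs.subset X H -> X <> H ->
  exists p, prime_divisor H p /\ Defs.subset X p.
Proof.
move=> dX sXH nXH.
pose S Y := [/\ Defs.subset X Y, Defs.subset Y H, hmod H Y, vop Y = Y & Y <> H].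
have [M [[sXM sMH mM vM nMH] maxM]] : exists M, S M /\ forall Y, S Y -> Defs.subset M Y -> Y = M.
  apply: acc_max; last by exists X; split=> //; [exact: D_mod| exact: D_vopE].
  by move=> Y [_ sY mY vY _]; split; [split| rewrite vY].
have MneH : ~ Defs.subset H M by move=> sHM; apply: nMH; apply: sext2.
have gen : forall c, H c -> ~ M c ->
    vop (fun z => M z \/ exists h, H h /\ z = c + h) = H.
  move=> c hc nMc; apply: contrapT => ne.
  have sU : Defs.subset (fun z => M z \/ exists h, H h /\ z = c + h) H.
    by move=> z [/sMH //| [h [hh ->]]]; apply: HD.
  have SA : S (vop (fun z => M z \/ exists h, H h /\ z = c + h)).
    split=> //.
    - by move=> x /sXM Mx; apply: vop_ext; left.
    - exact: vop_int.
    - exact: (@vop_mod _ _ HD).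
    - exact: vop_idem.
  have e : vop (fun z => M z \/ exists h, H h /\ z = c + h) = M.
    by apply: (maxM _ SA) => x Mx; apply: vop_ext; left.
  apply: nMc; rewrite -e; apply: vop_ext; right; exists 0.
  by split; [exact: H0| rewrite addr0].
exists M; split=> //; split; last by rewrite vM.
- split; first by split.
  + apply: contrapT => nh; apply: MneH => h hh; apply: contrapT => nMh.
    by apply: nh; exists h.
  + move=> a b ha hb Mab; apply: contrapT => nab.
    have nMa : ~ M a by move=> Ma; apply: nab; left.
    have nMb : ~ M b by move=> Mb; apply: nab; right.
    apply: MneH.
    have E : vprod (vop (fun z => M z \/ exists h, H h /\ z = a + h))
                   (vop (fun z => M z \/ exists h, H h /\ z = b + h)) = H.
      by rewrite (gen a ha nMa) (gen b hb nMb) vprodHH.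
    rewrite -E vprodE vop_sum_l vop_sum_r.
    apply: (@Defs_sub_trans _ _ (vop M)); last by rewrite vM.
    apply: vop_mono.
    move=> z [u [v [[Mu| [h [hh ->]]] [[Mv| [h' [hh' ->]]] ->]]]].
    * exact: mM (sMH _ Mu) Mv.
    * by rewrite addrC; apply: mM => //; apply: HD.
    * by apply: mM => //; apply: HD.
    * by rewrite addrACA addrC; apply: mM => //; apply: HD.
- by case: dX => -[x Xx] _ _ _; exists x; apply: sXM.
Qed.

Definition Dv (ps : seq (Q -> Prop)) := foldr vprod H ps.
Definition good (ps : seq (Q -> Prop)) := forall p, p \in ps -> prime_divisor H p.

Lemma good_cons p ps : good (p :: ps) <-> prime_divisor H p /\ good ps.
Proof.
split; first by move=> g; split=> [|q qi]; apply: g; rewrite inE ?eqxx ?qi ?orbT.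
by move=> [pp g] q; rewrite inE => /orP [/eqP ->| /g].
Qed.

Lemma good_cat ps qs : good (ps ++ qs) <-> good ps /\ good qs.
Proof.
split; first by move=> g; split=> q qi; apply: g; rewrite mem_cat qi ?orbT.
by move=> [g1 g2] q; rewrite mem_cat => /orP [/g1| /g2].
Qed.

Lemma good_perm ps qs : perm_eq ps qs -> good ps -> good qs.
Proof. by move=> pe g q; rewrite -(perm_mem pe); apply: g. Qed.

Lemma good_rem p ps : good ps -> good (rem p ps).
Proof. by move=> g q /mem_rem; apply: g. Qed.

Lemma Dv_mod ps : hmod H (Dv ps).
Proof. by case: ps => [|p ps]; [exact: HH| exact: (@vprod_mod _ _ HD)]. Qed.

Lemma Dv_vop ps : vop (Dv ps) = Dv ps.
Proof. by case: ps => [|p ps]; [exact: vopH| exact: vprod_vop]. Qed.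

Lemma Dv_D ps : good ps -> D (Dv ps).
Proof.
elim: ps => [|p ps IH]; first by move=> _; exact: D_H.
by move/good_cons=> [pp g]; apply: D_vprod; [exact: pd_D| exact: IH].
Qed.

Lemma Dv_int ps : good ps -> Defs.subset (Dv ps) H.
Proof.
elim: ps => [_ x //|p ps IH /good_cons [pp g]].
apply: (Defs_sub_trans _ (pd_int pp)).
by apply: vprod_int_sub; [exact: pd_mod pp| exact: pd_vop pp| exact: IH].
Qed.


Lemma Dv_cat ps qs : Dv (ps ++ qs) = vprod (Dv ps) (Dv qs).
Proof.
elim: ps => [|p ps IH] /=; first by rewrite (vprod_H H0 (@Dv_mod qs) (@Dv_vop qs)).
by rewrite IH vprodA.
Qed.

Lemma Dv_rem p ps : p \in ps -> Dv ps = vprod p (Dv (rem p ps)).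
Proof.
elim: ps => [|q ps IH] //=; rewrite inE; case: (eqVneq q p) => [->|nqp].
  by [].
move=> /= pin.
by rewrite (IH pin) vprodA (vprodC q p) -vprodA.
Qed.

Lemma Dv_perm ps qs : perm_eq ps qs -> Dv ps = Dv qs.
Proof.
elim: ps qs => [|p ps IH] qs pe.
  by move: pe; rewrite perm_sym => /perm_nilP ->.
have pin : p \in qs by rewrite -(perm_mem pe) mem_head.
rewrite (Dv_rem pin) /=; congr vprod; apply: IH.
by rewrite -(perm_cons p); apply: perm_trans pe (perm_to_rem pin).
Qed.

Lemma Dv_sub_mem ps p : good ps -> p \in ps -> Defs.subset (Dv ps) p.
Proof.
move=> g pin; rewrite (Dv_rem pin); have pp := g _ pin.
apply: vprod_int_sub; [exact: pd_mod pp| exact: pd_vop pp| apply: Dv_int].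
exact: good_rem.
Qed.

Lemma find_q p qs : prime_divisor H p -> good qs -> Defs.subset (Dv qs) p ->
  exists2 q, q \in qs & Defs.subset q p.
Proof.
move=> pp; elim: qs => [|q qs IH] /=.
  by move=> _ sHp; exfalso; apply: (pd_proper pp); apply: sext2 => //; exact: pd_int.
move=> /good_cons [pq g] s.
have := @prime_split p pp q (Dv qs) (pd_int pq) (Dv_int g).
case.
- by move=> x hx; apply: s; apply: sumset_vprod.
- by move=> sq; exists q; rewrite ?mem_head.
- by move=> sD; have [r ri sr] := IH g sD; exists r => //; rewrite inE ri orbT.
Qed.

Lemma Dv_unique ps qs : good ps -> good qs -> Dv ps = Dv qs -> perm_eq ps qs.
Proof.
elim: ps qs => [|p ps IH] qs gp gq e.
  case: qs gq e => [|q qs] // gq e; exfalso.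
  have pq := gq _ (mem_head q qs).
  apply: (pd_proper pq); apply: sext2; first exact: pd_int.
  by rewrite [X in Defs.subset X]e; apply: Dv_sub_mem => //; rewrite mem_head.
move: (gp) => /good_cons [pp gps].
have sp : Defs.subset (Dv qs) p by rewrite -e; apply: Dv_sub_mem => //; rewrite mem_head.
have [q qi sq] := find_q pp gq sp.
have eqp := pd_le pp (gq _ qi) sq; subst q.
have e2 : Dv ps = Dv (rem p qs).
  apply: (D_cancel (pd_D pp) (@Dv_mod ps) (@Dv_vop ps) (@Dv_mod (rem p qs)) (@Dv_vop (rem p qs))).
  by rewrite -(Dv_rem qi) -e.
have := IH _ gps (@good_rem p qs gq) e2.
by rewrite -(perm_cons p) => pe; apply: perm_trans pe _; rewrite perm_sym perm_to_rem.
Qed.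

Lemma factor_exists X0 : D X0 -> Defs.subset X0 H -> exists ps, good ps /\ X0 = Dv ps.
Proof.
move=> dX0 sX0; apply: contrapT => nf0.
pose S Y := [/\ D Y, Defs.subset Y H & ~ exists ps, good ps /\ Y = Dv ps].
have [X [[dX sX nf] maxX]] : exists M, S M /\ forall Y, S Y -> Defs.subset M Y -> Y = M.
  apply: acc_max; last by exists X0.
  by move=> Y [dY sY _]; split; [split=> //; exact: D_mod| rewrite (D_vopE dY)].
have nXH : X <> H by move=> e; apply: nf; exists [::]; split.
have [p [pp sXp]] := prime_above dX sX nXH.
have [p' [dp' ep']] := D_inv (pd_D pp).
pose Z := vprod p' X.
have dZ : D Z by apply: D_vprod.
have sZ : Defs.subset Z H by rewrite -ep' vprodC; apply: vprod_mono_r.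
have eX : vprod p Z = X.
  by rewrite /Z vprodA ep' (vprod_H H0 (D_mod dX) (D_vopE dX)).
have sXZ : Defs.subset X Z.
  rewrite -eX vprodC; apply: vprod_int_sub; [exact: D_mod| exact: D_vopE| exact: pd_int pp].
case: (pselect (exists ps, good ps /\ Z = Dv ps)) => [[ps [g eZ]]| nZ].
  by apply: nf; exists (p :: ps); split; [apply/good_cons| rewrite /= -eZ eX].
have eZX : Z = X by apply: maxX.
apply: (pd_proper pp).
apply: (D_cancel dX (pd_mod pp) (pd_vop pp) HH vopH).
rewrite vprodC -[in LHS]eZX eX vprodC (vprod_H H0 (D_mod dX) (D_vopE dX)) //.
Qed.

Lemma cl_Dv ps : good ps -> cl (Dv ps) = \sum_(p <- ps) cl p.
Proof.
elim: ps => [|p ps IH] /=; first by rewrite big_nil cl_H.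
move=> /good_cons [pp g]; rewrite big_cons clM ?IH //; [exact: pd_D| exact: Dv_D].
Qed.


Lemma trH_D (a : Q) : D (translate a H).
Proof. exact: D_tr D_H. Qed.

Lemma trH_self (a : Q) : translate a H a.
Proof. by exists 0; split; [exact: H0| rewrite addr0]. Qed.

Lemma trH_eq (a b : Q) : translate a H = translate b H -> m_unit H (a - b).
Proof.
move=> e; split.
  by have := trH_self a; rewrite e => /trP.
by rewrite opprB; have := trH_self b; rewrite -e => /trP.
Qed.

Lemma trH_eq' (a b : Q) : m_unit H (a - b) -> translate a H = translate b H.
Proof.
move=> [u1 u2]; apply: sext => z; rewrite !trP; split=> hz.
  have -> : z - b = (z - a) + (a - b) by rewrite addrA subrK.
  by apply: HD.
have -> : z - a = (z - b) + (b - a) by rewrite addrA subrK.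
by apply: HD => //; rewrite -opprB.
Qed.

Lemma unit_trH (u : Q) : m_unit H u <-> translate u H = H.
Proof.
split.
  by move=> hu; rewrite -[in RHS](tr0 H); apply: trH_eq'; rewrite oppr0 addr0.
by move=> e; have := @trH_eq u 0; rewrite tr0 oppr0 addr0; apply.
Qed.

Lemma trH_add (b c : Q) : translate (b + c) H = vprod (translate b H) (translate c H).
Proof. by rewrite (vprod_trH H0 HD). Qed.

Lemma trH_int (a : Q) : H a -> Defs.subset (translate a H) H.
Proof. by move=> ha z /trP hz; rewrite -(subrK a z); apply: HD. Qed.

Definition zs (ps : seq (Q -> Prop)) := \sum_(p <- ps) cl p = 0.

Lemma elem_of ps : good ps -> zs ps -> exists a, H a /\ translate a H = Dv ps.
Proof.
move=> g z.
have : cl (Dv ps) = cl H by rewrite cl_Dv // z cl_H.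
case/(clP (Dv_D g) D_H) => a ea; exists a; split; last by [].
by apply: (Dv_int g); rewrite ea; apply: trH_self.
Qed.

Lemma fact_elem (a : Q) : H a -> exists ps, good ps /\ translate a H = Dv ps.
Proof. by move=> ha; apply: factor_exists; [exact: trH_D| exact: trH_int]. Qed.

Lemma zs_elem (a : Q) ps : good ps -> translate a H = Dv ps -> zs ps.
Proof. by move=> g e; rewrite /zs -cl_Dv // -e cl_tr ?cl_H //; exact: D_H. Qed.

Lemma nil_unit (b : Q) ps : good ps -> translate b H = Dv ps -> m_unit H b -> ps = [::].
Proof.
move=> g e /unit_trH eb; apply/perm_nilP; apply: Dv_unique => //.
by rewrite -e eb.
Qed.

Lemma unit_nil (b : Q) : translate b H = Dv [::] -> m_unit H b.
Proof. by move=> e; apply/unit_trH. Qed.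

Lemma zs_perm ps qs : perm_eq ps qs -> zs ps -> zs qs.
Proof. by move=> pe; rewrite /zs (perm_big _ pe). Qed.

Lemma zs_cat ps qs : zs ps -> zs (ps ++ qs) -> zs qs.
Proof. by rewrite /zs big_cat => -> /=; rewrite add0r. Qed.

Definition patom (ps : seq (Q -> Prop)) :=
  ps != [::] /\ forall s1 s2, perm_eq ps (s1 ++ s2) -> zs s1 -> s1 = [::] \/ s2 = [::].

Lemma irr_iff (a : Q) ps : H a -> good ps -> translate a H = Dv ps ->
  (m_irreducible H a <-> patom ps).
Proof.
move=> ha g e; have zps := zs_elem g e; split.
  move=> [_ nu irr]; split.
    apply/eqP => ps0; apply: nu; apply: unit_nil; by rewrite e ps0.
  move=> s1 s2 pe z1.
  have /good_cat [g1 g2] := good_perm pe g.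
  have z2 : zs s2 by apply: (zs_cat z1); apply: zs_perm pe zps.
  have [b [hb eb]] := elem_of g1 z1.
  have [c [hc ec]] := elem_of g2 z2.
  have eabc : translate a H = translate (b + c) H.
    by rewrite e (Dv_perm pe) Dv_cat trH_add eb ec.
  have [u1 u2] := trH_eq eabc.
  set u := a - (b + c) in u1 u2.
  have ea : a = b + (c + u) by rewrite /u addrA addrC subrK.
  case: (irr b (c + u) hb (HD hc u1) ea) => hu.
    by left; apply: (nil_unit g1 eb).
  right; apply: (nil_unit g2 ec); apply/unit_trH.
  rewrite -[RHS]((unit_trH _).1 hu); apply: trH_eq'.
  by rewrite opprD addrA subrr add0r; split; rewrite ?opprK.
move=> [nps pa]; split=> //.
  by move=> hu; move: nps; rewrite (nil_unit g e hu).
move=> b c hb hc eabc.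
have [lb [gb eb]] := fact_elem hb.
have [lc [gc ec]] := fact_elem hc.
have pe : perm_eq ps (lb ++ lc).
  apply: Dv_unique => //; first by apply/good_cat.
  by rewrite -e Dv_cat -eb -ec -trH_add eabc.
case: (pa _ _ pe (zs_elem gb eb)) => [lb0| lc0].
  by left; apply: unit_nil; rewrite eb lb0.
by right; apply: unit_nil; rewrite ec lc0.
Qed.


Local Notation G0 := (classes_G0 H cl).

Lemma map_nil (T S : Type) (f : T -> S) (s : seq T) : map f s = [::] -> s = [::].
Proof. by case: s. Qed.

Lemma good_G0 ps : good ps -> forall g, g \in map cl ps -> G0 g.
Proof. by move=> gd g /mapP [p pi ->]; exists p; split=> //; apply: gd. Qed.

Lemma zs_seq_map ps : good ps -> zs ps -> zs_seq G0 (map cl ps).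
Proof. by move=> gd z; split; [exact: good_G0| rewrite big_map]. Qed.

Lemma B_atom_perm U V : perm_eq U V -> B_atom G0 U -> B_atom G0 V.
Proof.
move=> pe [[inU sU] nU spl]; split.
- split; first by move=> g; rewrite -(perm_mem pe); apply: inU.
  by rewrite -(perm_big _ pe).
- by apply: contra nU => /eqP V0; apply/eqP/perm_nilP; rewrite -V0.
- by move=> T W zT zW pe2; apply: spl => //; apply: perm_trans pe pe2.
Qed.

Lemma B_atom_iff ps : good ps -> zs ps -> (B_atom G0 (map cl ps) <-> patom ps).
Proof.
move=> gd z; split.
  move=> [_ nU spl]; split; first by apply: contra nU => /eqP ->.
  move=> s1 s2 pe z1.
  have /good_cat [g1 g2] := good_perm pe gd.
  have z2 : zs s2 by apply: (zs_cat z1); apply: zs_perm pe z.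
  case: (spl (map cl s1) (map cl s2) (zs_seq_map g1 z1) (zs_seq_map g2 z2)).
  - by rewrite -map_cat; apply: perm_map.
  - by move/map_nil; left.
  - by move/map_nil; right.
move=> [nps pa]; split; first exact: zs_seq_map.
  by apply: contra nps => /eqP /map_nil ->.
move=> T V [_ sT] [_ sV] pe.
have [s1 [s2 [p1 p2 p3]]] := lift_map pe.
have z1 : zs s1 by rewrite /zs -(big_map cl xpredT (fun g => g)) (perm_big _ p2).
case: (pa _ _ p1 z1) => e.
  by left; move: p2; rewrite e perm_sym => /perm_nilP.
by right; move: p3; rewrite e perm_sym => /perm_nilP.
Qed.


Definition pi (g : G) : Q -> Prop :=
  match pselect (exists p, prime_divisor H p /\ cl p = g) with
  | left e => proj1_sig (cid e) | right _ => H end.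

Lemma piP g : G0 g -> prime_divisor H (pi g) /\ cl (pi g) = g.
Proof. by rewrite /pi; case: pselect => [e _|ne /ne //]; case: (cid e). Qed.

Definition rho (ps : seq (Q -> Prop)) : Q :=
  match pselect (exists a, H a /\ translate a H = Dv ps) with
  | left e => proj1_sig (cid e) | right _ => 0 end.

Lemma rhoP ps : good ps -> zs ps -> H (rho ps) /\ translate (rho ps) H = Dv ps.
Proof.
move=> g z; rewrite /rho; case: pselect => [e|ne]; first by case: (cid e).
by exfalso; apply: ne; apply: elem_of.
Qed.

Definition lam (a : Q) : seq (Q -> Prop) :=
  match pselect (exists ps, good ps /\ translate a H = Dv ps) with
  | left e => proj1_sig (cid e) | right _ => [::] end.

Lemma lamP (a : Q) : H a -> good (lam a) /\ translate a H = Dv (lam a).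
Proof.
move=> ha; rewrite /lam; case: pselect => [e|ne]; first by case: (cid e).
by exfalso; apply: ne; apply: fact_elem.
Qed.

Lemma lift_seq U : zs_seq G0 U -> [/\ good (map pi U), map cl (map pi U) = U & zs (map pi U)].
Proof.
move=> [inU sU].
have e : map cl (map pi U) = U.
  by rewrite -map_comp; apply: map_id_in => g gi /=; case: (piP (inU g gi)).
split=> //.
- by move=> p /mapP [g gi ->]; case: (piP (inU g gi)).
- by rewrite /zs -(big_map cl xpredT (fun g => g)) e.
Qed.

Lemma good_flatten qss : (forall qs, qs \in qss -> good qs) -> good (flatten qss).
Proof.
elim: qss => [|qs qss IH] h /=; first by move=> p.
apply/good_cat; split; first by apply: h; rewrite mem_head.
by apply: IH => q qi; apply: h; rewrite inE qi orbT.
Qed.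

Lemma good_nseq n l : good l -> good (flatten (nseq n l)).
Proof. by move=> g; apply: good_flatten => qs /nseqP [->]. Qed.

Lemma Dv_sum (T : eqType) (f : T -> seq (Q -> Prop)) (g : T -> Q) (s : seq T) :
  (forall t, t \in s -> H (g t) /\ translate (g t) H = Dv (f t)) ->
  translate (\sum_(t <- s) g t) H = Dv (flatten (map f s)).
Proof.
elim: s => [|t s IH] h; first by rewrite big_nil tr0.
rewrite big_cons /= Dv_cat trH_add IH; last by move=> x xi; apply: h; rewrite inE xi orbT.
by rewrite (h t (mem_head _ _)).2.
Qed.

Lemma Dv_nseq (r : Q) l n : translate r H = Dv l -> translate (r *+ n) H = Dv (flatten (nseq n l)).
Proof.
move=> e; elim: n => [|n IH]; first by rewrite mulr0n tr0.
by rewrite mulrS /= trH_add Dv_cat IH e.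
Qed.

Lemma dir_ba :
  (forall U, B_atom G0 U -> B_abs_atom G0 U) ->
  (forall (U : seq G) (g : G), B_atom G0 U -> G0 g -> ~ classes_G1 H cl g ->
      (count_mem g U <= 1)%N) ->
  forall r, m_irreducible H r -> m_abs_irreducible H r.
Proof.
move=> hA hC r ir; split=> // n rs irs srs.
have hr : H r by case: ir.
have [gl el] := lamP hr; set l := lam r in gl el.
have pl : patom l := (irr_iff hr gl el).1 ir.
have zl := zs_elem gl el.
have BU : B_atom G0 (map cl l) := (B_atom_iff gl zl).2 pl.
have [_ abs] := hA _ BU.
have hrs : forall x, x \in rs -> H x by move=> x /irs [].
pose qss := map lam rs.
have gq : forall qs, qs \in qss -> good qs.
  by move=> qs /mapP [x xi ->]; exact: (lamP (hrs x xi)).1.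
have eq1 : translate (\sum_(x <- rs) x) H = Dv (flatten qss).
  by apply: (@Dv_sum _ lam (fun x => x)) => x xi; split; [apply: hrs| apply: (lamP (hrs x xi)).2].
have pe : perm_eq (flatten qss) (flatten (nseq n l)).
  apply: Dv_unique; [exact: good_flatten| exact: good_nseq|].
  by rewrite -eq1 srs (Dv_nseq n el).
pose Vs := map (map cl) qss.
have pe2 : perm_eq (flatten Vs) (flatten (nseq n (map cl l))).
  by rewrite /Vs -map_nseq -!map_flat; apply: perm_map.
have atV : forall V, V \in Vs -> B_atom G0 V.
  move=> V /mapP [qs /mapP [x xi ->] ->]; have [g e] := lamP (hrs x xi).
  apply/(B_atom_iff g (zs_elem g e)); apply/(irr_iff (hrs x xi) g e); exact: irs.
have [szV pV] := abs n Vs atV pe2.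
have szq : size qss = n by move: szV; rewrite size_map.
split; first by move: szq; rewrite size_map.
move=> x xi; have hx := hrs x xi; have [gx ex] := lamP hx.
have pq : perm_eq (lam x) l.
  apply: (@count_lemma _ _ cl (prime_divisor H) qss l n szq pe).
  - by move=> qs qsi; apply: pV; apply: map_f qsi.
  - exact: gl.
  - by move=> qs y qsi yi; apply: (gq qs qsi y yi).
  - move=> p pp; case: (pselect (classes_G1 H cl (cl p))) => [[p0 [pp0 e0 uq]]| nG1].
      left => q pq eq.
      by rewrite (seteqE (uq q pq eq)) (seteqE (uq p pp (erefl _))).
    by right; apply: hC => //; exists p.
  - by rewrite /qss; apply: map_f.
split=> //; apply: trH_eq.
by rewrite ex el; apply: Dv_perm.
Qed.


Lemma irr_of_V V (x : Q) : B_atom G0 V -> H x -> translate x H = Dv (map pi V) ->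
  m_irreducible H x.
Proof.
move=> BV hx ex; have [zV _ _] := BV; have [gV mV zsV] := lift_seq zV.
apply/(irr_iff hx gV ex); apply/(B_atom_iff gV zsV); by rewrite mV.
Qed.

Lemma perm_of_V V U (x r : Q) : zs_seq G0 V -> zs_seq G0 U ->
  translate x H = Dv (map pi V) -> translate r H = Dv (map pi U) ->
  m_associated H x r -> perm_eq V U.
Proof.
move=> zV zU ex er [_ _ u].
have [gV mV _] := lift_seq zV; have [gU mU _] := lift_seq zU.
have e : Dv (map pi V) = Dv (map pi U) by rewrite -ex -er; apply: trH_eq'.
by rewrite -mV -mU; apply: perm_map; apply: Dv_unique.
Qed.

Lemma dir_ab1 : (forall r, m_irreducible H r -> m_abs_irreducible H r) ->
  forall U, B_atom G0 U -> B_abs_atom G0 U.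
Proof.
move=> hA U BU; split=> // n Vs atV pe.
have [zU nU _] := BU.
have [gl ml zl] := lift_seq zU; set l := map pi U in gl ml zl.
have [hr er] := rhoP gl zl; set r := rho l in hr er.
have ir : m_irreducible H r := irr_of_V BU hr er.
have [_ abs] := hA r ir.
have zV : forall V, V \in Vs -> zs_seq G0 V by move=> V /atV [].
have hx : forall V, V \in Vs -> H (rho (map pi V)) /\ translate (rho (map pi V)) H = Dv (map pi V).
  by move=> V Vi; have [g _ z] := lift_seq (zV V Vi); apply: rhoP.
case Vs0: Vs => [|V0 Vs'].
  rewrite Vs0 in pe; case: n pe => [|m] pe; first by split.
  exfalso; move: pe; rewrite perm_sym => /perm_nilP /(congr1 size).
  rewrite /= size_cat => /eqP; rewrite addn_eq0 size_eq0 => /andP [/eqP U0 _].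
  by move: nU; rewrite U0.
rewrite -Vs0.
have eS : translate (\sum_(V <- Vs) rho (map pi V)) H = translate (r *+ n) H.
  rewrite (Dv_sum (f := map pi) (g := fun V => rho (map pi V))) //.
  rewrite (Dv_nseq n er) -map_flat (Dv_perm (perm_map pi pe)) map_flat map_nseq.
  by [].
have [u1 u2] := trH_eq (esym eS).
set u := r *+ n - _ in u1 u2.
pose x0 := rho (map pi V0) + u.
pose rs := x0 :: map (fun V => rho (map pi V)) Vs'.
have V0i : V0 \in Vs by rewrite Vs0 mem_head.
have hx0 : H x0 by apply: HD => //; exact: (hx V0 V0i).1.
have ex0 : translate x0 H = Dv (map pi V0).
  rewrite -(hx V0 V0i).2; apply: trH_eq'.
  by rewrite /x0 addrC addKr; split; rewrite ?opprK.
have irs : forall y, y \in rs -> m_irreducible H y.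
  move=> y; rewrite inE => /orP [/eqP ->|/mapP [V Vi ->]].
    exact: (irr_of_V (atV V0 V0i) hx0 ex0).
  have Vi' : V \in Vs by rewrite Vs0 inE Vi orbT.
  by have [h e] := hx V Vi'; apply: (irr_of_V (atV V Vi') h e).
have srs : \sum_(y <- rs) y = r *+ n.
  rewrite big_cons (big_map (fun V => rho (map pi V)) xpredT (fun y => y)).
  rewrite /x0 -addrA (addrC u) addrA.
  rewrite -(big_cons 0 +%R V0 Vs' xpredT (fun V => rho (map pi V))) -Vs0.
  by rewrite /u addrC subrK.
have [szr asr] := abs n rs irs srs.
split; first by rewrite -szr Vs0 /= size_map.
move=> V; rewrite Vs0 inE => /orP [/eqP ->|Vi].
  by apply: (perm_of_V (zV V0 V0i) zU ex0 er); apply: asr; rewrite mem_head.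
have Vi' : V \in Vs by rewrite Vs0 inE Vi orbT.
apply: (perm_of_V (zV V Vi') zU (hx V Vi').2 er); apply: asr.
by rewrite inE; apply/orP; right; apply: map_f.
Qed.


Lemma dir_ab2 : (forall r, m_irreducible H r -> m_abs_irreducible H r) ->
  forall (U : seq G) (g : G), B_atom G0 U -> G0 g -> ~ classes_G1 H cl g ->
      (count_mem g U <= 1)%N.
Proof.
move=> hA U g BU G0g nG1; rewrite leqNgt; apply/negP => c2.
have [zU nU _] := BU; have [inU _] := zU.
have [pp e] := piP G0g; set p := pi g in pp e.
have [p' [pp' e' ne]] : exists p', [/\ prime_divisor H p', cl p' = g & p' <> p].
  apply: contrapT => nex; apply: nG1; exists p; split=> // q pq eq.
  case: (pselect (q = p)) => [->|nqp]; first by [].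
  by exfalso; apply: nex; exists q.
have gU : g \in U by rewrite -has_pred1 has_count; apply: leq_trans c2.
have gU' : g \in rem g U.
  rewrite -has_pred1 has_count.
  have := perm_to_rem gU => /permP /(_ (pred1 g)) /=; rewrite eqxx.
  by move: c2 => /[swap] ->; rewrite ltnS.
set W := rem g (rem g U).
have pU : perm_eq U (g :: g :: W).
  by apply: perm_trans (perm_to_rem gU) _; rewrite perm_cons perm_to_rem.
have BU' : B_atom G0 (g :: g :: W) by apply: B_atom_perm BU.
have [zU' _ _] := BU'.
have inW : forall h, h \in W -> G0 h by move=> h hi; apply: (zU'.1); rewrite !inE hi !orbT.
have gw : good (map pi W) by move=> q /mapP [h hi ->]; case: (piP (inW h hi)).
have mw : map cl (map pi W) = W.
  by rewrite -map_comp; apply: map_id_in => h hi /=; case: (piP (inW h hi)).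
set w := map pi W in gw mw.
have mk : forall a b, prime_divisor H a -> prime_divisor H b -> cl a = g -> cl b = g ->
    [/\ good [:: a, b & w], map cl [:: a, b & w] = [:: g, g & W] & zs [:: a, b & w]].
  move=> a b pa pb ea eb.
  have m : map cl [:: a, b & w] = [:: g, g & W] by rewrite /= ea eb mw.
  split=> //; first by apply/good_cons; split=> //; apply/good_cons.
  by rewrite /zs -(big_map cl xpredT (fun x => x)) m; exact: zU'.2.
have [g1 m1 z1] := mk p p' pp pp' e e'.
have [g2 m2 z2] := mk p p pp pp e e.
have [g3 m3 z3] := mk p' p' pp' pp' e' e'.
have at1 : patom [:: p, p' & w] by apply/(B_atom_iff g1 z1); rewrite m1.
have at2 : patom [:: p, p & w] by apply/(B_atom_iff g2 z2); rewrite m2.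
have at3 : patom [:: p', p' & w] by apply/(B_atom_iff g3 z3); rewrite m3.
have [hr er] := rhoP g1 z1; set r := rho _ in hr er.
have [hb eb] := rhoP g2 z2; set b := rho _ in hb eb.
have [hc ec] := rhoP g3 z3; set c := rho _ in hc ec.
have ir : m_irreducible H r by apply/(irr_iff hr g1 er).
have pe23 : perm_eq ([:: p, p & w] ++ [:: p', p' & w]) ([:: p, p' & w] ++ [:: p, p' & w]).
  apply: perm_count => x; rewrite !count_cat /=.
  by case: (p == x); case: (p' == x); rewrite ?add0n ?add1n ?addSn ?addnS.
have eS : translate (b + c) H = translate (r *+ 2) H.
  by rewrite trH_add eb ec -Dv_cat (Dv_perm pe23) Dv_cat -er -trH_add mulr2n.
have [u1 u2] := trH_eq (esym eS).
set u := r *+ 2 - _ in u1 u2.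
have ebu : translate (b + u) H = Dv [:: p, p & w].
  rewrite -eb; apply: trH_eq'.
  by rewrite addrC addKr; split; rewrite ?opprK.
have irs : forall y, y \in [:: b + u; c] -> m_irreducible H y.
  move=> y; rewrite !inE => /orP [/eqP ->|/eqP ->].
    by apply/(irr_iff (HD hb u1) g2 ebu).
  by apply/(irr_iff hc g3 ec).
have srs : \sum_(y <- [:: b + u; c]) y = r *+ 2.
  by rewrite !big_cons big_nil addr0 addrAC /u addrC subrK.
have [_ asr] := (hA r ir).2 2 _ irs srs.
have [_ _ uu] := asr (b + u) (mem_head _ _).
have e21 : Dv [:: p, p & w] = Dv [:: p, p' & w] by rewrite -ebu -er; apply: trH_eq'.
have := Dv_unique g2 g1 e21 => /permP /(_ (pred1 p')) /=.
have -> : (p == p') = false by apply/eqP => epp; apply: ne.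
by rewrite eqxx /= add0n => /eqP; rewrite -{1}[count_mem p' w]add0n eqn_add2r.
Qed.

Lemma main_equiv :
  (forall r, m_irreducible H r -> m_abs_irreducible H r) <->
   ((forall U, B_atom G0 U -> B_abs_atom G0 U) /\
    (forall (U : seq G) (g : G),
        B_atom G0 U -> G0 g ->
        ~ classes_G1 H cl g -> (count_mem g U <= 1)%N)).
Proof.
split; first by move=> hA; split; [exact: dir_ab1| exact: dir_ab2].
by move=> [h1 h2]; apply: dir_ba.
Qed.


End Krull.

Local Close Scope ring_scope.

Theorem mainTheorem12 (Q : zmodType) (H : Q -> Prop)
    (G : zmodType) (cl : (Q -> Prop) -> G) :
  krull H -> is_class_group H cl ->
  ((forall r, m_irreducible H r -> m_abs_irreducible H r) <->
   ((forall U, B_atom (classes_G0 H cl) U -> B_abs_atom (classes_G0 H cl) U) /\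
    (forall (U : seq G) (g : G),
        B_atom (classes_G0 H cl) U -> classes_G0 H cl g ->
        ~ classes_G1 H cl g -> (count_mem g U <= 1)%N))).
Proof.
move=> KH CG; exact: (@main_equiv Q H G cl KH CG).
Qed.
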